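(* Suppose there exists a $(v,k;r)$-MOHS $\{\mathcal P_1,\dots,\mathcal P_r\}$ over an abelian group $G$ of order $2v+1$ in which every block of every $\mathcal P_i$ admits an ordering $(b_0,\dots,b_{k-1})$ whose partial sums $b_0,b_0+b_1,\dots,b_0+\dots+b_{k-1}$ are pairwise distinct. Then there exist $r$ pairwise orthogonal $k$-cycle systems of order $2v+1$.
   Context: A half-set of an abelian group $G$ of odd order $2v+1\ge7$ is a subset $V\subseteq G\setminus\{0\}$ containing exactly one element of each pair $\{g,-g\}$, $g\ne0$. A $(v,k)$ Heffter system on $V$ is a partition of $V$ into blocks of size $k$ each summing to $0$ in $G$. Two Heffter systems on the same half-set are orthogonal if every block of one meets every block of the other in at most one element; a $(v,k;r)$-MOHS is a set of $r$ pairwise orthogonal $(v,k)$ Heffter systems on a common half-set. A $k$-cycle $(x_0,\dots,x_{k-1})$ on distinct vertices has edges $\{x_i,x_{i+1}\}$ (indices mod $k$). A $k$-cycle system of order $m$ is a set of $k$-cycles whose edge sets partition the edges of $K_m$; two such systems on the same vertex set are orthogonal if every cycle of one shares at most one edge with every cycle of the other. *)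

(* Defs.v *)
From HB Require Import structures.
From mathcomp Require Import all_boot all_order all_algebra.
Set Implicit Arguments. Unset Strict Implicit. Unset Printing Implicit Defensive.
Import GRing.Theory.
Local Open Scope ring_scope.

Definition half_set (G : finZmodType) (V : {set G}) : Prop :=
  (0 \notin V) /\ (forall g : G, g != 0 -> (g \in V) != (- g \in V)).

Definition heffter_system (G : finZmodType) (V : {set G}) (k : nat)
    (P : {set {set G}}) : Prop :=
  partition P V /\
  (forall B, B \in P -> #|B| = k /\ \sum_(x in B) x = 0).

Definition orth_heffter (G : finZmodType) (P Q : {set {set G}}) : Prop :=
  forall B C, B \in P -> C \in Q -> (#|B :&: C| <= 1)%N.

Definition MOHS (G : finZmodType) (V : {set G}) (k r : nat)
    (P : 'I_r -> {set {set G}}) : Prop :=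
  half_set V /\ (forall i, heffter_system V k (P i)) /\
  (forall i j, i != j -> orth_heffter (P i) (P j)).

Definition simply_orderable (G : finZmodType) (B : {set G}) : Prop :=
  exists s : seq G, perm_eq s (enum B) /\ uniq (scanl +%R 0 s).

(* the edges {x_i, x_{i+1}} (indices mod k) of the cycle (x_0,...,x_{k-1}) *)
Definition cycle_edges (T : finType) (c : seq T) : {set {set T}} :=
  [set [set p.1; p.2] | p in zip c (rot 1 c)].

Definition is_kcycle (T : finType) (k : nat) (c : seq T) : Prop :=
  uniq c /\ size c = k.

Definition kcycle_system (T : finType) (k : nat) (C : seq (seq T)) : Prop :=
  (forall c, c \in C -> is_kcycle k c) /\
  (forall x y : T, x != y ->
     #|[set j : 'I_(size C) | [set x; y] \in cycle_edges (nth [::] C j)]| = 1%N).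

Definition orth_cycle_systems (T : finType) (C D : seq (seq T)) : Prop :=
  forall c d, c \in C -> d \in D ->
    (#|cycle_edges c :&: cycle_edges d| <= 1)%N.

(* Main.v *)
Require Import Defs.
From HB Require Import structures.
From mathcomp Require Import all_boot all_order all_algebra.
From mathcomp Require Import zify.
Set Implicit Arguments. Unset Strict Implicit. Unset Printing Implicit Defensive.
Import GRing.Theory.

Lemma edgesP (T : finType) (c : seq T) (x0 : T) e :
  reflect (exists2 m, m < size c & e = [set nth x0 c m; nth x0 c (m.+1 %% size c)])
          (e \in cycle_edges c).
Proof.
have Hrot : forall m, m < size c -> nth x0 (rot 1 c) m = nth x0 c (m.+1 %% size c).
  case: c => [|x c'] //= m Hm.
  rewrite rot1_cons nth_rcons.
  case: (ltnP m (size c')) => Hm'.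
    by rewrite modn_small.
  have -> : m = size c' by rewrite /= in Hm; lia.
  by rewrite eqxx modnn.
have Hsz : size (zip c (rot 1 c)) = size c by rewrite size_zip size_rot minnn.
apply: (iffP imsetP) => [[p pin ->]|[m mlt ->]].
  have Hi : index p (zip c (rot 1 c)) < size c by rewrite -Hsz index_mem.
  move: (nth_index (x0, x0) pin) Hi; set j := index p _ => Ep Hi.
  exists j => //.
  rewrite -Ep nth_zip ?size_rot //= Hrot //.
exists (nth (x0, x0) (zip c (rot 1 c)) m).
  by rewrite mem_nth // Hsz.
by rewrite nth_zip ?size_rot //= Hrot.
Qed.

Definition c0 (G : finZmodType) (s : seq G) := scanl +%R 0%R s.
Definition dl (G : finZmodType) (s : seq G) m := nth 0%R s (m.+1 %% size s).
Definition cyc (G : finZmodType) (T : finType) (f : G -> T) (s : seq G) (g : G) :=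
  map (fun x => f (x + g)%R) (c0 s).

Lemma foldl_sum (G : finZmodType) (s : seq G) (a : G) :
  foldl +%R a s = (a + \sum_(x <- s) x)%R.
Proof.
elim: s a => [|x s IH] a /=; first by rewrite big_nil addr0.
by rewrite IH big_cons addrA.
Qed.

Lemma base_step (G : finZmodType) (s : seq G) m :
  (\sum_(x <- s) x = 0)%R -> m < size s ->
  nth 0%R (c0 s) (m.+1 %% size s) = (nth 0%R (c0 s) m + dl s m)%R.
Proof.
move=> Hs Hm; rewrite /c0 /dl.
case: (ltnP m.+1 (size s)) => Hm'.
  rewrite modn_small // !nth_scanl // (take_nth 0%R Hm') foldl_rcons //.
have Em : m.+1 = size s by lia.
rewrite Em modnn !nth_scanl //; last by rewrite -Em.
rewrite Em take_size [foldl _ _ s]foldl_sum Hs.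
case: s Hs Hm Em Hm' => [|x s] //= _ _ _ _.
by rewrite take0 /= add0r addr0 add0r.
Qed.

Lemma cyc_edgeP (G : finZmodType) (T : finType) (f : G -> T) s g e :
  (\sum_(x <- s) x = 0)%R ->
  reflect (exists2 m, m < size s &
     e = [set f (nth 0%R (c0 s) m + g)%R; f (nth 0%R (c0 s) m + g + dl s m)%R])
    (e \in cycle_edges (cyc f s g)).
Proof.
move=> Hs.
have Hsz : size (cyc f s g) = size s by rewrite /cyc size_map /c0 size_scanl.
have Hsc : size (c0 s) = size s by rewrite /c0 size_scanl.
have Hn : forall m, m < size s -> nth (f 0%R) (cyc f s g) (m.+1 %% size s) =
   f ((c0 s)`_m + g + dl s m)%R.
  move=> m mlt.
  have Hm1 : m.+1 %% size s < size s by rewrite ltn_mod; case: (size s) mlt.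
  by rewrite /cyc (nth_map 0%R) ?Hsc // base_step // addrAC.
have Hn0 : forall m, m < size s -> nth (f 0%R) (cyc f s g) m = f ((c0 s)`_m + g)%R.
  by move=> m mlt; rewrite /cyc (nth_map 0%R) ?Hsc.
apply: (iffP (edgesP _ (f 0%R) _)); rewrite Hsz => -[m mlt ->]; exists m => //;
  by rewrite Hn0 // Hn.
Qed.

Lemma halfN (G : finZmodType) (V : {set G}) b :
  half_set V -> b \in V -> (- b)%R \in V -> False.
Proof.
move=> [H0 H] bV nbV.
have bn0 : b != 0%R by apply: contraNneq H0 => <-.
by move: (H b bn0); rewrite bV nbV.
Qed.

Lemma L1 (G : finZmodType) (T : finType) (V : {set G}) (f : G -> T) a b a' b' :
  half_set V -> injective f -> b \in V -> b' \in V ->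
  [set f a; f (a + b)%R] = [set f a'; f (a' + b')%R] -> a = a' /\ b = b'.
Proof.
move=> hV fi bV b'V E.
have n0 : forall x, x \in V -> x != 0%R.
  by move=> x xV; apply: contraNneq hV.1 => <-.
have Ha : f a \in [set f a'; f (a' + b')%R] by rewrite -E !inE eqxx.
have Hb : f (a + b)%R \in [set f a'; f (a' + b')%R] by rewrite -E !inE eqxx orbT.
rewrite !inE in Ha Hb.
case/orP: Ha => /eqP/fi Ha; case/orP: Hb => /eqP/fi Hb; subst.
- by move/eqP: Hb; rewrite -subr_eq0 addrC addKr (negPf (n0 _ bV)).
- by split => //; apply: (addrI a').
- exfalso; apply: (halfN hV b'V).
  have E0 : (b' + b = 0)%R by apply: (addrI a'); rewrite addr0 addrA.
  have -> : (- b')%R = b by apply/eqP; rewrite eq_sym -addr_eq0 addrC E0.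
  done.
- by move/eqP: Hb; rewrite -subr_eq0 addrC addKr (negPf (n0 _ bV)).
Qed.

Lemma dl_mem (G : finZmodType) (s : seq G) m : m < size s -> dl s m \in s.
Proof. by move=> Hm; rewrite /dl mem_nth // ltn_mod; case: (size s) Hm. Qed.

Lemma dl_inj (G : finZmodType) (s : seq G) m1 m2 :
  uniq s -> m1 < size s -> m2 < size s -> dl s m1 = dl s m2 -> m1 = m2.
Proof.
move=> Hu H1 H2; rewrite /dl => /eqP; rewrite nth_uniq ?ltn_mod; last 3 first.
- by case: (size s) H1.
- by case: (size s) H1.
- done.
move=> /eqP E.
have : (m1.+1 %% size s = m2.+1 %% size s)%N by [].
clear E; move: H1 H2; set k := size s => H1 H2 E.
have F : forall m, m < k -> m.+1 %% k = if m.+1 < k then m.+1 else 0.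
  move=> m hm; case: ltnP => h; first by rewrite modn_small.
  have -> : m.+1 = k by lia.
  by rewrite modnn.
rewrite !F // in E; move: E; case: (ltnP m1.+1 k); case: (ltnP m2.+1 k); lia.
Qed.

Lemma dl_surj (G : finZmodType) (s : seq G) x :
  x \in s -> exists2 m, m < size s & dl s m = x.
Proof.
move=> xs; have Hj : index x s < size s by rewrite index_mem.
have Hx := nth_index 0%R xs.
case E: (index x s) Hj Hx => [|j] Hj Hx.
- exists (size s).-1; first by lia.
  by rewrite /dl prednK // modnn.
- exists j; first by lia.
  by rewrite /dl modn_small.
Qed.

Theorem proposition6p4 (G : finZmodType) (v k r : nat)
  (hv : (3 <= v)%N) (hG : #|G| = (2 * v + 1)%N)
  (V : {set G}) (P : 'I_r -> {set {set G}}) :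
  MOHS V k P ->
  (forall (i : 'I_r) (B : {set G}), B \in P i -> simply_orderable B) ->
  exists Cs : 'I_r -> seq (seq 'I_(2 * v + 1)),
    (forall i, kcycle_system k (Cs i)) /\
    (forall i j, i != j -> orth_cycle_systems (Cs i) (Cs j)).
Proof.
move=> [hV [HP Horth]] HS.
have Hex : forall (i : 'I_r) (B : {set G}), exists s : seq G,
    (B \in P i) ==> (perm_eq s (enum B) && uniq (c0 s)).
  move=> i B; case BP: (B \in P i); last by exists [::].
  have [s [s1 s2]] := HS i B BP; exists s; by rewrite /= s1 s2.
pose ord i B := xchoose (Hex i B).
have Hord : forall i B, B \in P i ->
   [/\ uniq (c0 (ord i B)), uniq (ord i B), size (ord i B) = k,
       (forall x, (x \in ord i B) = (x \in B)) & (\sum_(x <- ord i B) x = 0)%R].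
  move=> i B BP; have := xchooseP (Hex i B); move=> /implyP /(_ BP) /andP [p u].
  have [_ HB] := HP i; have [Hk Hsum] := HB B BP.
  split => //.
  - by rewrite (perm_uniq p) enum_uniq.
  - by rewrite (perm_size p) -cardE Hk.
  - by move=> x; rewrite (perm_mem p) mem_enum.
  - by rewrite (perm_big _ p) big_enum.
have Hsub : forall i B x, B \in P i -> x \in B -> x \in V.
  move=> i B x BP xB; rewrite -(cover_partition (HP i).1); apply/bigcupP; by exists B.
have Hsame : forall i B B' x, B \in P i -> B' \in P i -> x \in B -> x \in B' -> B = B'.
  move=> i B B' x BP B'P xB xB'; apply/eqP; apply: contraT => neq.
  case/and3P: (HP i).1 => _ triv _.
  by have := disjointFr (trivIsetP triv B B' BP B'P neq) xB; rewrite xB'.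
pose f (x : G) : 'I_(2 * v + 1) := cast_ord hG (enum_rank x).
have fi : injective f by move=> x y /cast_ord_inj /enum_rank_inj.
have fs : forall y : 'I_(2 * v + 1), exists x, f x = y.
  by move=> y; exists (enum_val (cast_ord (esym hG) y)); rewrite /f enum_valK cast_ordKV.
have dlV : forall i B m, B \in P i -> m < size (ord i B) -> dl (ord i B) m \in V.
  move=> i B m BP mlt; have [_ _ _ mem _] := Hord i B BP.
  by apply: (Hsub i B) => //; rewrite -mem dl_mem.
have dlB : forall i B m, B \in P i -> m < size (ord i B) -> dl (ord i B) m \in B.
  move=> i B m BP mlt; have [_ _ _ mem _] := Hord i B BP.
  by rewrite -mem dl_mem.
pose L i := enum [set bg : {set G} * G | bg.1 \in P i].
exists (fun i => [seq cyc f (ord i bg.1) bg.2 | bg <- L i]).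
split.
- move=> i; split.
  + move=> c /mapP [[B g]]; rewrite mem_enum inE /= => BP ->.
    have [u _ sz _ _] := Hord i B BP.
    split; first by rewrite /cyc map_inj_uniq // => a b /fi /addIr.
    by rewrite /cyc size_map /c0 size_scanl.
  + move=> x y xy.
    have [x' Ex] := fs x; have [y' Ey] := fs y; subst x y.
    have Hx : forall a b, b \in V -> exists B g, B \in P i /\
        [set f a; f (a + b)%R] \in cycle_edges (cyc f (ord i B) g).
      move=> a b bV.
      have : b \in cover (P i) by rewrite (cover_partition (HP i).1).
      move=> /bigcupP [B BP bB].
      have [_ u sz mem sum] := Hord i B BP.
      rewrite -mem in bB; have [m mlt dm] := dl_surj bB.
      exists B, (a - nth 0%R (c0 (ord i B)) m)%R; split => //.
      apply/(cyc_edgeP _ _ _ sum); exists m => //.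
      have -> : ((c0 (ord i B))`_m + (a - (c0 (ord i B))`_m))%R = a by rewrite addrC subrK.
      by rewrite dm.
    have [B0 [g0 [B0P E0]]] : exists B g, B \in P i /\
        [set f x'; f y'] \in cycle_edges (cyc f (ord i B) g).
      have xy' : (y' - x' != 0)%R.
        by rewrite subr_eq0; apply: contraNneq xy => ->.
      case dV: ((y' - x')%R \in V).
      * have [B [g [BP E]]] := Hx x' _ dV; exists B, g; split => //.
        by move: E; rewrite addrC subrK.
      * have ndV : (- (y' - x'))%R \in V.
          by move: (hV.2 _ xy'); rewrite dV; case: (_ \in V).
        have [B [g [BP E]]] := Hx y' _ ndV; exists B, g; split => //.
        by move: E; rewrite opprB addrC subrK setUC.
    have Huniq : forall B g B' g' e, B \in P i -> B' \in P i ->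
        e \in cycle_edges (cyc f (ord i B) g) ->
        e \in cycle_edges (cyc f (ord i B') g') -> (B, g) = (B', g').
      move=> B g B' g' e BP B'P.
      have [_ u _ _ sum] := Hord i B BP; have [_ u' _ _ sum'] := Hord i B' B'P.
      move=> /(cyc_edgeP _ _ _ sum) [m mlt ->] /(cyc_edgeP _ _ _ sum') [m' mlt' E].
      have [E1 E2] := L1 hV fi (dlV _ _ _ BP mlt) (dlV _ _ _ B'P mlt') E.
      have EB : B = B'.
        apply: (Hsame i B B' (dl (ord i B) m)) => //; first exact: dlB.
        by rewrite E2; apply: dlB.
      subst B'.
      have Em := dl_inj u mlt mlt' E2; subst m'.
      by rewrite (addrI _ E1).
    have uL : uniq (L i) by apply: enum_uniq.
    have inL : (B0, g0) \in L i by rewrite mem_enum inE.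
    set C := [seq _ | bg <- L i].
    have j0lt : index (B0, g0) (L i) < size C by rewrite size_map index_mem.
    rewrite (_ : [set _ | _] = [set Ordinal j0lt]) ?cards1 //.
    apply/setP => j; rewrite !inE.
    have jlt : (j < size (L i))%N by rewrite -(size_map (fun bg => cyc f (ord i bg.1) bg.2)).
    rewrite /C (nth_map (set0, 0%R)) //.
    have bgin := mem_nth (set0, 0%R) jlt.
    move: bgin; set bg := nth _ _ _ => bgin.
    have bgP : bg.1 \in P i by move: bgin; rewrite mem_enum inE.
    apply/idP/eqP.
    * move=> H; have := Huniq _ _ _ _ _ bgP B0P H E0.
      rewrite -surjective_pairing => Ebg.
      apply: val_inj => /=; by rewrite -Ebg index_uniq.
    * move=> Ej; rewrite /bg Ej /= nth_index //.
- move=> i j ij c d /mapP [[B g]] + -> /mapP [[B' g']] + ->.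
  rewrite !mem_enum !inE /= => BP B'P.
  have [_ u _ _ sum] := Hord i B BP; have [_ u' _ _ sum'] := Hord j B' B'P.
  have key : forall e, e \in cycle_edges (cyc f (ord i B) g) ->
      e \in cycle_edges (cyc f (ord j B') g') ->
      exists2 m, m < size (ord i B) &
        dl (ord i B) m \in B :&: B' /\
        e = [set f (nth 0%R (c0 (ord i B)) m + g)%R;
             f (nth 0%R (c0 (ord i B)) m + g + dl (ord i B) m)%R].
    move=> e /(cyc_edgeP _ _ _ sum) [m mlt ->] /(cyc_edgeP _ _ _ sum') [m' mlt' E].
    have [E1 E2] := L1 hV fi (dlV _ _ _ BP mlt) (dlV _ _ _ B'P mlt') E.
    exists m => //; split => //.
    by rewrite inE dlB // E2 dlB.
  apply/card_le1_eqP => e1 e2; rewrite !inE => /andP [h1 h1'] /andP [h2 h2'].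
  have [m1 lt1 [in1 ->]] := key _ h1 h1'.
  have [m2 lt2 [in2 ->]] := key _ h2 h2'.
  have := Horth i j ij B B' BP B'P => /card_le1_eqP /(_ _ _ in1 in2) Ed.
  by rewrite (dl_inj u lt1 lt2 (esym Ed)).
Qed.
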